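(* Let $0<\beta<\frac13$ and let $S\subset\mathbb{R}$ be a Bernstein set. Then McMullen's absolute winning game with parameter $\beta$ and target set $S$ is not determined, i.e., neither Alice nor Bob has a winning strategy.
   Context: A Bernstein set is a set $S\subset\mathbb{R}$ that has nonempty intersection with every closed uncountable subset of $\mathbb{R}$ but contains no closed uncountable subset of $\mathbb{R}$. McMullen's absolute winning game with parameter $0<\beta<\frac13$ and target set $S$: Bob first chooses a compact interval $B_0$ of positive length. Alice then chooses an interval $A_0\subset B_0$ with $|A_0|=\beta|B_0|$. Bob then chooses a compact interval $B_1\subset B_0\setminus A_0$ with $|B_1|=\beta|B_0|$, and so on: for every $n\ge0$, $A_n\subset B_n$ with $|A_n|=\beta|B_n|$, and $B_{n+1}\subset B_n\setminus A_n$ with $|B_{n+1}|=\beta|B_n|$. Alice wins if $\bigcap_{n\ge0}B_n$ has nonempty intersection with $S$; otherwise Bob wins. Here $|I|$ denotes the length of an interval $I$. A strategy for a player is a rule specifying a legal move in every possible situation as a function of all previously chosen intervals; it is winning if it guarantees that player wins regardless of the opponent's moves. The game is determined on $S$ if one of the players has a winning strategy, and not determined otherwise. *)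

(* Defs.v *)
From Stdlib Require Import Reals List.
Import ListNotations.
Open Scope R_scope.

Definition closed_R (C : R -> Prop) : Prop :=
  forall x, (forall eps, 0 < eps -> exists y, C y /\ Rabs (y - x) < eps) -> C x.

(* countable = enumerated (possibly with repetitions) by a sequence; the empty
   set is countable *)
Definition countable_R (C : R -> Prop) : Prop :=
  exists f : nat -> R, forall x, C x -> exists n, f n = x.

Definition uncountable_R (C : R -> Prop) : Prop := ~ countable_R C.

Definition Bernstein (S : R -> Prop) : Prop :=
  (forall C, closed_R C -> uncountable_R C -> exists x, C x /\ S x) /\
  (forall C, closed_R C -> uncountable_R C -> ~ (forall x, C x -> S x)).

(* Bob's move: compact interval [a,b], encoded as (a,b). *)
Definition Bmove := (R * R)%type.
(* Alice's move: interval with endpoints c <= d; the booleans say whether the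
   left / right endpoint is included (so any kind of interval is allowed). *)
Definition Amove := (R * R * bool * bool)%type.

Definition inB (B : Bmove) (x : R) : Prop := fst B <= x <= snd B.
Definition lenB (B : Bmove) : R := snd B - fst B.

Definition inA (A : Amove) (x : R) : Prop :=
  match A with
  | (c, d, lc, rc) =>
      (if lc then c <= x else c < x) /\ (if rc then x <= d else x < d)
  end.
Definition lenA (A : Amove) : R :=
  match A with (c, d, _, _) => d - c end.
Definition wfA (A : Amove) : Prop :=
  match A with (c, d, _, _) => c <= d end.

(* A history is the list of completed rounds (B_i, A_i), in chronological order. *)
Definition history := list (Bmove * Amove).

Definition legalA (beta : R) (B : Bmove) (A : Amove) : Prop :=
  wfA A /\ (forall x, inA A x -> inB B x) /\ lenA A = beta * lenB B.

Definition legalB (beta : R) (h : history) (B : Bmove) : Prop :=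
  match rev h with
  | [] => fst B < snd B
  | (B', A') :: _ =>
      fst B <= snd B /\
      (forall x, inB B x -> inB B' x /\ ~ inA A' x) /\
      lenB B = beta * lenB B'
  end.

Definition dummyB : Bmove := (0, 0).
Definition dummyA : Amove := (0, 0, true, true).

Definition legal_history (beta : R) (h : history) : Prop :=
  forall n, (n < length h)%nat ->
    legalB beta (firstn n h) (fst (nth n h (dummyB, dummyA))) /\
    legalA beta (fst (nth n h (dummyB, dummyA))) (snd (nth n h (dummyB, dummyA))).

Definition AliceStrategy := history -> Bmove -> Amove.
Definition BobStrategy := history -> Bmove.

Definition legal_Alice_strategy (beta : R) (sigma : AliceStrategy) : Prop :=
  forall h B, legal_history beta h -> legalB beta h B -> legalA beta B (sigma h B).

Definition legal_Bob_strategy (beta : R) (tau : BobStrategy) : Prop :=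
  forall h, legal_history beta h -> legalB beta h (tau h).

Definition prefix (Bs : nat -> Bmove) (As : nat -> Amove) (n : nat) : history :=
  map (fun i => (Bs i, As i)) (seq 0 n).

Definition Alice_wins (S : R -> Prop) (Bs : nat -> Bmove) : Prop :=
  exists x, S x /\ forall n, inB (Bs n) x.

Definition Alice_has_winning_strategy (beta : R) (S : R -> Prop) : Prop :=
  exists sigma : AliceStrategy,
    legal_Alice_strategy beta sigma /\
    forall (Bs : nat -> Bmove) (As : nat -> Amove),
      (forall n, legalB beta (prefix Bs As n) (Bs n)) ->
      (forall n, As n = sigma (prefix Bs As n) (Bs n)) ->
      Alice_wins S Bs.

Definition Bob_has_winning_strategy (beta : R) (S : R -> Prop) : Prop :=
  exists tau : BobStrategy,
    legal_Bob_strategy beta tau /\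
    forall (Bs : nat -> Bmove) (As : nat -> Amove),
      (forall n, Bs n = tau (prefix Bs As n)) ->
      (forall n, legalA beta (Bs n) (As n)) ->
      ~ Alice_wins S Bs.

Definition determined (beta : R) (S : R -> Prop) : Prop :=
  Alice_has_winning_strategy beta S \/ Bob_has_winning_strategy beta S.

(* Main.v *)
Require Import Defs.
From Stdlib Require Import Reals.
From Stdlib Require Import Lra Lia List Classical ClassicalEpsilon.
Import ListNotations.
Open Scope R_scope.

Definition play := ((nat -> Bmove) * (nat -> Amove))%type.
Definition prf (P : play) n := prefix (fst P) (snd P) n.
Definition agree (P Q : play) (n : nat) :=
  forall i, (i <= n)%nat -> fst P i = fst Q i /\ snd P i = snd Q i.
Definition Full beta (P : play) :=
  forall k, legalB beta (prf P k) (fst P k) /\ legalA beta (fst P k) (snd P k).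

Lemma prefix_S Bs As k :
  prefix Bs As (S k) = prefix Bs As k ++ [(Bs k, As k)].
Proof. unfold prefix. rewrite seq_S, map_app. reflexivity. Qed.

Lemma length_prefix Bs As k : length (prefix Bs As k) = k.
Proof. unfold prefix. rewrite length_map, length_seq. reflexivity. Qed.

Lemma rev_prefix_S Bs As k :
  rev (prefix Bs As (S k)) = (Bs k, As k) :: rev (prefix Bs As k).
Proof. rewrite prefix_S, rev_app_distr. reflexivity. Qed.

Lemma nth_prefix Bs As k i d : (i < k)%nat -> nth i (prefix Bs As k) d = (Bs i, As i).
Proof.
  induction k; intros H; [lia|].
  rewrite prefix_S. destruct (Nat.eq_dec i k) as [->|Hne].
  - rewrite app_nth2; rewrite length_prefix; [|lia]. rewrite Nat.sub_diag. reflexivity.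
  - rewrite app_nth1; [apply IHk; lia|]. rewrite length_prefix; lia.
Qed.

Lemma firstn_prefix Bs As k i : (i <= k)%nat -> firstn i (prefix Bs As k) = prefix Bs As i.
Proof.
  induction k; intros H.
  - assert (i = 0%nat) by lia. subst. reflexivity.
  - destruct (Nat.eq_dec i (S k)) as [->|Hne].
    + apply firstn_all2. rewrite length_prefix. lia.
    + rewrite prefix_S, firstn_app, length_prefix.
      replace (i - k)%nat with 0%nat by lia. simpl. rewrite app_nil_r. apply IHk. lia.
Qed.

Lemma prefix_ext Bs As Bs' As' k :
  (forall i, (i < k)%nat -> Bs i = Bs' i /\ As i = As' i) ->
  prefix Bs As k = prefix Bs' As' k.
Proof.
  intros H. unfold prefix. apply map_ext_in. intros i Hi.
  apply in_seq in Hi. destruct (H i) as [-> ->]; [lia|reflexivity].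
Qed.

Lemma agree_pre P Q n k : agree P Q n -> (k <= S n)%nat -> prf P k = prf Q k.
Proof. intros H Hk. apply prefix_ext. intros i Hi. apply H. lia. Qed.

Lemma agree_refl P n : agree P P n.
Proof. intros i _; split; reflexivity. Qed.

Lemma agree_trans P Q T n : agree P Q n -> agree Q T n -> agree P T n.
Proof. intros H1 H2 i Hi. destruct (H1 i Hi), (H2 i Hi). split; congruence. Qed.

Lemma agree_mono P Q n m : (m <= n)%nat -> agree P Q n -> agree P Q m.
Proof. intros Hm H i Hi. apply H. lia. Qed.

Lemma legalB_S beta Bs As k B :
  legalB beta (prefix Bs As (S k)) B <->
  (fst B <= snd B /\ (forall x, inB B x -> inB (Bs k) x /\ ~ inA (As k) x) /\
   lenB B = beta * lenB (Bs k)).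
Proof. unfold legalB. rewrite rev_prefix_S. reflexivity. Qed.

Lemma legalB_0 beta Bs As B : legalB beta (prefix Bs As 0) B <-> fst B < snd B.
Proof. reflexivity. Qed.

Lemma legal_history_prefix beta Bs As k :
  (forall i, (i < k)%nat -> legalB beta (prefix Bs As i) (Bs i) /\ legalA beta (Bs i) (As i)) ->
  legal_history beta (prefix Bs As k).
Proof.
  intros H n Hn. rewrite length_prefix in Hn.
  rewrite nth_prefix by exact Hn. rewrite firstn_prefix by lia. simpl. apply H; exact Hn.
Qed.

Section FullFacts.
Variable beta : R.
Hypothesis Hb : 0 < beta < 1/3.
Variable P : play.
Hypothesis HF : Full beta P.

Lemma Full_le k : fst (fst P k) <= snd (fst P k).
Proof.
  destruct k as [|k].
  - destruct (HF 0%nat) as [H _]; unfold prf in H. apply legalB_0 in H. lra.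
  - destruct (HF (S k)) as [H _]; unfold prf in H. apply legalB_S in H. tauto.
Qed.

Lemma Full_nest k x : inB (fst P (S k)) x -> inB (fst P k) x.
Proof. destruct (HF (S k)) as [H _]. unfold prf in H. apply legalB_S in H. intro. apply H. auto. Qed.

Lemma Full_nest_le i j x : (i <= j)%nat -> inB (fst P j) x -> inB (fst P i) x.
Proof.
  intros Hij. induction Hij; auto. intro Hx. apply IHHij. apply Full_nest. exact Hx.
Qed.

Lemma Full_avoid k x : inB (fst P (S k)) x -> ~ inA (snd P k) x.
Proof. destruct (HF (S k)) as [H _]. unfold prf in H. apply legalB_S in H. intro. apply H. auto. Qed.

Lemma Full_len k : lenB (fst P k) = beta ^ k * lenB (fst P 0%nat).
Proof.
  induction k; simpl; [ring|].
  destruct (HF (S k)) as [H _]. unfold prf in H. apply legalB_S in H.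
  destruct H as [_ [_ ->]]. rewrite IHk. ring.
Qed.

Lemma Full_len0 : 0 < lenB (fst P 0%nat).
Proof. destruct (HF 0%nat) as [H _]. unfold prf in H. apply legalB_0 in H. unfold lenB. lra. Qed.

Lemma Full_lenpos k : 0 < lenB (fst P k).
Proof. rewrite Full_len. apply Rmult_lt_0_compat; [apply pow_lt; lra|apply Full_len0]. Qed.

Lemma Full_small eps : 0 < eps -> exists N, forall k, (N <= k)%nat -> lenB (fst P k) < eps.
Proof.
  intros He. destruct (pow_lt_1_zero beta) with (y := eps / lenB (fst P 0%nat)) as [N HN].
  - rewrite Rabs_pos_eq; lra.
  - apply Rdiv_lt_0_compat; [lra|apply Full_len0].
  - exists N. intros k Hk. specialize (HN k Hk). rewrite Rabs_pos_eq in HN by (apply pow_le; lra).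
    rewrite Full_len. pose proof Full_len0.
    apply Rmult_lt_compat_r with (r := lenB (fst P 0%nat)) in HN; [|lra].
    unfold Rdiv in HN. rewrite Rmult_assoc, Rinv_l in HN by lra. lra.
Qed.

End FullFacts.

Lemma mono_chain (f : nat -> R) : (forall k, f k <= f (S k)) -> forall i j, (i <= j)%nat -> f i <= f j.
Proof. intros H i j Hij. induction Hij; [lra|]. specialize (H m). lra. Qed.

Lemma nested (I : nat -> Bmove) :
  (forall k, fst (I k) <= snd (I k)) -> (forall k x, inB (I (S k)) x -> inB (I k) x) ->
  exists x, forall k, inB (I k) x.
Proof.
  intros Hle Hn.
  assert (Ha : forall k, fst (I k) <= fst (I (S k))).
  { intro k. assert (inB (I (S k)) (fst (I (S k)))) by (split; [lra|apply Hle]).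
    apply Hn in H. apply H. }
  assert (Hbm : forall k, - snd (I k) <= - snd (I (S k))).
  { intro k. assert (inB (I (S k)) (snd (I (S k)))) by (split; [apply Hle|lra]).
    apply Hn in H. destruct H. lra. }
  assert (Hab : forall i j, fst (I i) <= snd (I j)).
  { intros i j. destruct (Nat.le_ge_cases i j) as [h|h].
    - pose proof (mono_chain _ Ha i j h). specialize (Hle j). lra.
    - pose proof (mono_chain _ Hbm j i h). specialize (Hle i). lra. }
  set (E := fun r => exists i, r = fst (I i)).
  destruct (completeness E) as [m [Hub Hlub]].
  - exists (snd (I 0%nat)). intros r [i ->]. apply Hab.
  - exists (fst (I 0%nat)). exists 0%nat. reflexivity.
  - exists m. intro k. split.
    + apply Hub. exists k. reflexivity.
    + apply Hlub. intros r [i ->]. apply Hab.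
Qed.

Lemma Full_point beta P : 0 < beta < 1/3 -> Full beta P -> exists x, forall k, inB (fst P k) x.
Proof.
  intros Hb HF. apply nested; intros; [eapply Full_le; eauto|eapply Full_nest; eauto].
Qed.

Lemma closed_inB B : closed_R (inB B).
Proof.
  intros x H. unfold inB. split.
  - destruct (Rle_or_lt (fst B) x) as [h|h]; [exact h|].
    destruct (H (fst B - x)) as [y [[Hy1 Hy2] Hy]]; [lra|].
    apply Rabs_def2 in Hy. lra.
  - destruct (Rle_or_lt x (snd B)) as [h|h]; [exact h|].
    destruct (H (x - snd B)) as [y [[Hy1 Hy2] Hy]]; [lra|].
    apply Rabs_def2 in Hy. lra.
Qed.

Lemma not_closure (C : R -> Prop) x : closed_R C -> ~ C x ->
  exists eps, 0 < eps /\ forall y, C y -> eps <= Rabs (y - x).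
Proof.
  intros Hc Hn. apply NNPP. intro Hne. apply Hn, Hc. intros eps He.
  apply NNPP. intro Hne2. apply Hne. exists eps. split; [exact He|].
  intros y Hy. destruct (Rle_or_lt eps (Rabs (y - x))) as [h|h]; [exact h|].
  exfalso. apply Hne2. exists y. auto.
Qed.

Lemma closed_union C1 C2 : closed_R C1 -> closed_R C2 -> closed_R (fun x => C1 x \/ C2 x).
Proof.
  intros H1 H2 x H. apply NNPP. intros Hn.
  destruct (not_closure C1 x H1) as [e1 [He1 Hy1]]; [tauto|].
  destruct (not_closure C2 x H2) as [e2 [He2 Hy2]]; [tauto|].
  destruct (H (Rmin e1 e2)) as [y [[Hy|Hy] Hd]].
  - apply Rmin_pos; lra.
  - specialize (Hy1 y Hy). pose proof (Rmin_l e1 e2). lra.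
  - specialize (Hy2 y Hy). pose proof (Rmin_r e1 e2). lra.
Qed.

Definition Node := (play * nat)%type.
Definition Iv (N : Node) : Bmove := fst (fst N) (snd N).

Definition dplay : play := (fun _ => dummyB, fun _ => dummyA).

Section Perfect.
Variable beta : R.
Hypothesis Hb : 0 < beta < 1/3.
Variable Good : play -> Prop.
Hypothesis Hfull : forall P, Good P -> Full beta P.
Hypothesis Hclos : forall P, (forall k, exists Q, Good Q /\ agree P Q k) -> Good P.
Hypothesis Hex : exists P, Good P.
Hypothesis Hsplit : forall P n, Good P -> exists P1 P2 m, (n < m)%nat /\ Good P1 /\ Good P2 /\
  agree P P1 n /\ agree P P2 n /\ (forall x, inB (fst P1 m) x -> ~ inB (fst P2 m) x).

Definition splitP (N : Node) (c : Node * Node) : Prop :=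
  Good (fst N) -> (Good (fst (fst c)) /\ Good (fst (snd c)) /\
   (snd N < snd (fst c))%nat /\ (snd N < snd (snd c))%nat /\
   agree (fst N) (fst (fst c)) (snd N) /\ agree (fst N) (fst (snd c)) (snd N) /\
   forall x, inB (Iv (fst c)) x -> ~ inB (Iv (snd c)) x).

Definition inhN : inhabited (Node * Node) := inhabits ((dplay, 0%nat), (dplay, 0%nat)).

Definition children (N : Node) := epsilon inhN (splitP N).
Definition child (b : bool) N := if b then fst (children N) else snd (children N).

Lemma children_spec N : splitP N (children N).
Proof.
  unfold children. apply epsilon_spec. destruct (classic (Good (fst N))) as [HG|HG].
  - destruct (Hsplit (fst N) (snd N) HG) as [P1 [P2 [m [Hm [G1 [G2 [A1 [A2 D]]]]]]]].
    exists ((P1, m), (P2, m)). intros _. unfold Iv; simpl. tauto.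
  - exists ((dplay, 0%nat), (dplay, 0%nat)). intro; contradiction.
Qed.

Definition GoodN (N : Node) := Good (fst N).

Lemma child_good b N : GoodN N -> GoodN (child b N) /\ (snd N < snd (child b N))%nat /\
  agree (fst N) (fst (child b N)) (snd N).
Proof.
  intros HG. pose proof (children_spec N HG). unfold GoodN. destruct b; simpl; tauto.
Qed.

Lemma child_sub b N x : GoodN N -> inB (Iv (child b N)) x -> inB (Iv N) x.
Proof.
  intros HG Hx. destruct (child_good b N HG) as [G1 [Hlt Ha]].
  unfold Iv in *. pose proof (Full_nest_le beta _ (Hfull _ G1) (snd N) (snd (child b N)) x ltac:(lia) Hx).
  destruct (Ha (snd N) (le_n _)) as [E _]. rewrite E. exact H.
Qed.

Lemma child_disj N x : GoodN N -> inB (Iv (child true N)) x -> ~ inB (Iv (child false N)) x.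
Proof.
  intros HG Hx. pose proof (children_spec N HG) as H. unfold child in *.
  destruct H as [_ [_ [_ [_ [_ [_ D]]]]]]. apply D. exact Hx.
Qed.

Fixpoint U (N : Node) (k : nat) : R -> Prop :=
  match k with
  | O => inB (Iv N)
  | S k => fun x => U (child true N) k x \/ U (child false N) k x
  end.

Lemma U_sub k : forall N x, GoodN N -> U N k x -> inB (Iv N) x.
Proof.
  induction k; intros N x HG H; simpl in H; [exact H|].
  destruct H as [H|H].
  - apply (child_sub true); auto. apply IHk; auto. apply child_good; auto.
  - apply (child_sub false); auto. apply IHk; auto. apply child_good; auto.
Qed.

Lemma U_mono k : forall N x, GoodN N -> U N (S k) x -> U N k x.
Proof.
  induction k; intros N x HG H.
  - simpl in H. simpl. destruct H as [H|H].
    + apply (child_sub true); auto.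
    + apply (child_sub false); auto.
  - simpl in H. destruct H as [H|H].
    + left. apply IHk; auto. apply child_good; auto.
    + right. apply IHk; auto. apply child_good; auto.
Qed.

Lemma U_mono_le N x k k' : GoodN N -> (k <= k')%nat -> U N k' x -> U N k x.
Proof. intros HG Hk. induction Hk; auto. intro H. apply IHHk. apply U_mono; auto. Qed.

Lemma U_closed k : forall N, closed_R (U N k).
Proof. induction k; intros N; simpl; [apply closed_inB|]. apply closed_union; apply IHk. Qed.

Definition inhP : inhabited play := inhabits dplay.
Definition root : Node := (epsilon inhP Good, 0%nat).
Lemma root_good : GoodN root.
Proof. unfold GoodN, root; simpl. apply epsilon_spec. exact Hex. Qed.

Definition Cset x := forall k, U root k x.

Lemma Cset_closed : closed_R Cset.
Proof.
  intros x H k. apply U_closed. intros eps He. destruct (H eps He) as [y [Hy Hd]].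
  exists y. split; auto.
Qed.

Lemma limit (nd : nat -> Node) x :
  (forall k, GoodN (nd k)) -> (forall k, (snd (nd k) < snd (nd (S k)))%nat) ->
  (forall k, agree (fst (nd k)) (fst (nd (S k))) (snd (nd k))) ->
  (forall k, inB (Iv (nd k)) x) ->
  exists Q, Good Q /\ forall i, inB (fst Q i) x.
Proof.
  intros HG Hlt Hag Hx.
  assert (Hge : forall k, (k <= snd (nd k))%nat).
  { induction k; [lia|]. specialize (Hlt k). lia. }
  assert (Hmono : forall i j, (i <= j)%nat -> (snd (nd i) <= snd (nd j))%nat).
  { intros i j Hij. induction Hij; [lia|]. specialize (Hlt m). lia. }
  assert (Hagr : forall i j, (i <= j)%nat -> agree (fst (nd i)) (fst (nd j)) (snd (nd i))).
  { intros i j Hij. induction Hij; [apply agree_refl|].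
    eapply agree_trans; [exact IHHij|]. eapply agree_mono; [|apply Hag]. apply Hmono. exact Hij. }
  set (Q := ((fun i => fst (fst (nd i)) i), (fun i => snd (fst (nd i)) i)) : play).
  assert (HQ : forall k, agree Q (fst (nd k)) k).
  { intros k i Hi. simpl. apply (Hagr i k Hi). apply Hge. }
  exists Q. split.
  - apply Hclos. intro k. exists (fst (nd k)). split; [apply HG|apply HQ].
  - intro i. simpl. eapply (Full_nest_le beta _ (Hfull _ (HG i))); [apply Hge|]. apply Hx.
Qed.

Fixpoint br x k : Node :=
  match k with
  | O => root
  | S k => let N := br x k in
      if excluded_middle_informative (forall j, U (child true N) j x)
      then child true N else child false N
  end.

Lemma br_spec x : Cset x -> forall k, GoodN (br x k) /\ (forall j, U (br x k) j x) /\
  exists b, br x (S k) = child b (br x k).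
Proof.
  intros HC k. induction k.
  - split; [apply root_good|]. split; [exact HC|]. cbn [br].
    destruct excluded_middle_informative; [exists true|exists false]; reflexivity.
  - destruct IHk as [HG [HU [b Hb']]].
    assert (HG' : GoodN (br x (S k))) by (rewrite Hb'; apply child_good; auto).
    split; [exact HG'|]. split.
    + cbn [br]. destruct excluded_middle_informative as [h|h]; [exact h|].
      apply not_all_ex_not in h. destruct h as [j0 Hj0]. intro j.
      pose proof (HU (S (max j j0))) as H. cbn [U] in H. destruct H as [H|H].
      * exfalso. apply Hj0. eapply U_mono_le; [exact (proj1 (child_good true _ HG))| |exact H]. lia.
      * eapply U_mono_le; [exact (proj1 (child_good false _ HG))| |exact H]. lia.
    + cbn [br]. destruct excluded_middle_informative; [exists true|exists false]; reflexivity.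
Qed.

Lemma Cset_play x : Cset x -> exists Q, Good Q /\ forall i, inB (fst Q i) x.
Proof.
  intros HC. pose proof (br_spec x HC) as H.
  apply (limit (br x)).
  - intro k. apply H.
  - intro k. destruct (H k) as [HG [_ [b ->]]]. apply child_good; auto.
  - intro k. destruct (H k) as [HG [_ [b ->]]]. apply child_good; auto.
  - intro k. destruct (H k) as [HG [HU _]]. apply (U_sub 0); auto.
Qed.

Fixpoint av (f : nat -> R) k : Node :=
  match k with
  | O => root
  | S k => let N := av f k in
      if excluded_middle_informative (inB (Iv (child true N)) (f k))
      then child false N else child true N
  end.

Lemma av_spec f k : GoodN (av f k) /\ exists b, av f (S k) = child b (av f k).
Proof.
  induction k.
  - split; [apply root_good|]. cbn [av]. destruct excluded_middle_informative; [exists false|exists true]; reflexivity.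
  - destruct IHk as [HG [b Hb']]. assert (GoodN (av f (S k))) by (rewrite Hb'; apply child_good; auto).
    split; auto. cbn [av]. destruct excluded_middle_informative; [exists false|exists true]; reflexivity.
Qed.

Lemma Cset_uncountable : uncountable_R Cset.
Proof.
  intros [f Hf].
  destruct (nested (fun k => Iv (av f k))) as [x Hx].
  - intro k. destruct (av_spec f k) as [HG _]. apply (Full_le beta Hb _ (Hfull _ HG)).
  - intros k x Hx. destruct (av_spec f k) as [HG [b Hb']]. cbv beta in Hx. rewrite Hb' in Hx.
    eapply child_sub; eauto.
  - assert (HU : forall k j, inB (Iv (av f (j + k))) x -> U (av f j) k x).
    { induction k; intros j H; simpl.
      - rewrite Nat.add_0_r in H. exact H.
      - destruct (av_spec f j) as [_ [b Hb']].
        replace (j + S k)%nat with (S j + k)%nat in H by lia.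
        specialize (IHk (S j) H). rewrite Hb' in IHk. destruct b; tauto. }
    assert (HC : Cset x) by (intro k; apply (HU k 0%nat); apply Hx).
    destruct (Hf x HC) as [n Hn]. specialize (Hx (S n)). simpl in Hx.
    destruct (av_spec f n) as [HG _].
    destruct excluded_middle_informative as [h|h].
    + apply (child_disj _ _ HG h). rewrite Hn. exact Hx.
    + apply h. rewrite Hn. exact Hx.
Qed.

Lemma perfect : exists C, closed_R C /\ uncountable_R C /\
  forall x, C x -> exists Q, Good Q /\ forall i, inB (fst Q i) x.
Proof.
  exists Cset. split; [apply Cset_closed|]. split; [apply Cset_uncountable|]. apply Cset_play.
Qed.

End Perfect.

Fixpoint hist (F : history -> Bmove * Amove) (k : nat) : history :=
  match k with O => [] | S k => hist F k ++ [F (hist F k)] end.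
Definition rplay F : play := (fun i => fst (F (hist F i)), fun i => snd (F (hist F i))).

Lemma length_hist F k : length (hist F k) = k.
Proof. induction k; simpl; [reflexivity|]. rewrite length_app, IHk. simpl. lia. Qed.

Lemma pre_rplay F k : prf (rplay F) k = hist F k.
Proof.
  induction k; [reflexivity|]. unfold prf in *. rewrite prefix_S, IHk. simpl.
  destruct (F (hist F k)); reflexivity.
Qed.

Definition ext (P : play) (m : nat) (G : history -> Bmove * Amove) (h : history) :=
  if (length h <=? m)%nat then (fst P (length h), snd P (length h)) else G h.

Lemma hist_ext P m G k : (k <= S m)%nat -> hist (ext P m G) k = prf P k.
Proof.
  induction k; intros Hk; [reflexivity|]. simpl. rewrite IHk by lia.
  unfold prf. rewrite prefix_S. f_equal. unfold ext. rewrite length_prefix.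
  replace (k <=? m)%nat with true by (symmetry; apply Nat.leb_le; lia). reflexivity.
Qed.

Lemma ext_agree P m G : agree P (rplay (ext P m G)) m.
Proof.
  intros i Hi. unfold rplay. simpl. unfold ext at 1 3. rewrite length_hist.
  replace (i <=? m)%nat with true by (symmetry; apply Nat.leb_le; lia). simpl. split; reflexivity.
Qed.

Lemma ext_after P m G i : (m < i)%nat ->
  (fst (rplay (ext P m G)) i, snd (rplay (ext P m G)) i) = G (hist (ext P m G) i).
Proof.
  intros Hi. unfold rplay. simpl. unfold ext at 1 3. rewrite length_hist.
  replace (i <=? m)%nat with false by (symmetry; apply Nat.leb_gt; lia).
  destruct (G _); reflexivity.
Qed.

Lemma inA_bounds c d lc rc x : inA (c, d, lc, rc) x -> c <= x <= d.
Proof. unfold inA. destruct lc, rc; intros [H1 H2]; lra. Qed.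

Definition closedA (B : Bmove) : Amove := (fst B, snd B, true, true).
Definition defA beta (B : Bmove) : Amove := (fst B, fst B + beta * lenB B, true, true).

Lemma defA_legal beta B : 0 < beta < 1/3 -> fst B <= snd B -> legalA beta B (defA beta B).
Proof.
  intros Hb HB. unfold legalA, defA, wfA, lenA, lenB, inB. simpl.
  assert (0 <= beta * (snd B - fst B)) by (apply Rmult_le_pos; lra).
  split; [lra|]. split; [|ring].
  intros x Hx. simpl in Hx. destruct Hx as [Hx1 Hx2].
  assert (beta * (snd B - fst B) <= snd B - fst B) by nra. lra.
Qed.

Definition Alo (A : Amove) : R := match A with (c, _, _, _) => c end.

Definition defmove beta (B : Bmove) (A : Amove) : Bmove :=
  let a := fst B in let b := snd B in
  if Rlt_dec (a + beta * (b - a)) (Alo A) then (a, a + beta * (b - a))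
  else (b - beta * (b - a), b).

Lemma defmove_legal beta B A : 0 < beta < 1/3 -> fst B < snd B -> legalA beta B A ->
  fst (defmove beta B A) <= snd (defmove beta B A) /\
  (forall x, inB (defmove beta B A) x -> inB B x /\ ~ inA A x) /\
  lenB (defmove beta B A) = beta * lenB B.
Proof.
  intros Hb HB [Hw [Hin Hl]]. destruct A as [[[c d] lc] rc].
  unfold wfA, lenA, lenB in *. simpl in Hl.
  assert (0 < beta * (snd B - fst B)) by (apply Rmult_lt_0_compat; lra).
  assert (beta * (snd B - fst B) < (snd B - fst B) / 3) by nra.
  unfold defmove, Alo. destruct Rlt_dec as [h|h]; unfold inB; simpl.
  - split; [lra|]. split; [|ring].
    intros x Hx. split; [lra|]. intro HA. apply inA_bounds in HA. lra.
  - split; [lra|]. split; [|ring].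
    intros x Hx. split; [lra|]. intro HA. apply inA_bounds in HA. lra.
Qed.

Definition defB beta (h : history) : Bmove :=
  match rev h with [] => (0, 1) | (B, A) :: _ => defmove beta B A end.

Lemma defB_S beta Bs As k : defB beta (prefix Bs As (S k)) = defmove beta (Bs k) (As k).
Proof. unfold defB. rewrite rev_prefix_S. reflexivity. Qed.

Lemma lenpos_step beta Bs As i B : 0 < beta ->
  legalB beta (prefix Bs As i) B -> (forall j, (j < i)%nat -> 0 < lenB (Bs j)) -> 0 < lenB B.
Proof.
  intros Hb H Hp. destruct i.
  - apply legalB_0 in H. unfold lenB. lra.
  - apply legalB_S in H. destruct H as [_ [_ ->]]. apply Rmult_lt_0_compat; auto.
Qed.

Section AliceCase.
Variable beta : R.
Hypothesis Hb : 0 < beta < 1/3.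
Variable sigma : AliceStrategy.
Hypothesis Hs : legal_Alice_strategy beta sigma.

Definition GoodS (P : play) :=
  (forall k, legalB beta (prf P k) (fst P k)) /\
  (forall k, snd P k = sigma (prf P k) (fst P k)).

Lemma partialS (Q : play) k :
  (forall i, (i <= k)%nat -> legalB beta (prf Q i) (fst Q i) /\ snd Q i = sigma (prf Q i) (fst Q i)) ->
  forall i, (i <= k)%nat -> legalA beta (fst Q i) (snd Q i) /\ 0 < lenB (fst Q i).
Proof.
  intros H. induction k; intros i Hi.
  - assert (i = 0%nat) by lia. subst. destruct (H 0%nat (le_n _)) as [HB HA].
    split.
    + rewrite HA. apply Hs; [|exact HB]. apply legal_history_prefix. intros; lia.
    + apply (lenpos_step beta (fst Q) (snd Q) 0 _); [lra|exact HB|]. intros; lia.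
  - assert (IH : forall i, (i <= k)%nat -> legalA beta (fst Q i) (snd Q i) /\ 0 < lenB (fst Q i))
      by (apply IHk; intros; apply H; lia).
    destruct (Nat.eq_dec i (S k)) as [->|Hne]; [|apply IH; lia].
    destruct (H (S k) (le_n _)) as [HB HA]. split.
    + rewrite HA. apply Hs; [|exact HB]. apply legal_history_prefix.
      intros j Hj. split; [apply H; lia|apply IH; lia].
    + apply (lenpos_step beta (fst Q) (snd Q) (S k) _); [lra|exact HB|]. intros j Hj. apply IH. lia.
Qed.

Lemma GoodS_full P : GoodS P -> Full beta P.
Proof.
  intros [H1 H2] k. split; [apply H1|].
  apply (partialS P k); [|lia]. intros; auto.
Qed.

Lemma GoodS_clos P : (forall k, exists Q, GoodS Q /\ agree P Q k) -> GoodS P.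
Proof.
  intros H. split; intro k; destruct (H k) as [Q [[G1 G2] Ha]];
  rewrite (agree_pre P Q k k Ha) by lia; destruct (Ha k (le_n _)) as [E1 E2]; rewrite E1.
  - apply G1.
  - rewrite E2. apply G2.
Qed.

Lemma extS_good P m (G : history -> Bmove) :
  GoodS P ->
  legalB beta (prf P (S m)) (G (prf P (S m))) ->
  (forall k, (S m < k)%nat -> forall Q : play,
      (forall i, (i < k)%nat -> legalA beta (fst Q i) (snd Q i) /\ 0 < lenB (fst Q i)) ->
      legalB beta (prf Q k) (G (prf Q k))) ->
  GoodS (rplay (ext P m (fun h => (G h, sigma h (G h))))).
Proof.
  intros [P1 P2] H0 Hrest.
  set (Q := rplay (ext P m (fun h => (G h, sigma h (G h))))).
  assert (Hag : agree P Q m) by apply ext_agree.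
  assert (Haft : forall i, (m < i)%nat -> fst Q i = G (prf Q i) /\ snd Q i = sigma (prf Q i) (G (prf Q i))).
  { intros i Hi. pose proof (ext_after P m (fun h => (G h, sigma h (G h))) i Hi) as E.
    rewrite <- pre_rplay in E. fold Q in E.
    assert (E1 := f_equal fst E). assert (E2 := f_equal snd E). simpl in E1, E2.
    split; assumption. }
  assert (HA : forall k, snd Q k = sigma (prf Q k) (fst Q k)).
  { intro k. destruct (Compare_dec.le_lt_dec k m) as [h|h].
    - rewrite <- (agree_pre P Q m k Hag) by lia. destruct (Hag k h) as [<- <-]. apply P2.
    - destruct (Haft k h) as [-> ->]. reflexivity. }
  assert (HB : forall k, legalB beta (prf Q k) (fst Q k)).
  { intro k. induction k as [k IHk] using (well_founded_induction Wf_nat.lt_wf).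
    destruct (Compare_dec.le_lt_dec k m) as [h|h].
    - rewrite <- (agree_pre P Q m k Hag) by lia. destruct (Hag k h) as [<- _]. apply P1.
    - destruct (Haft k h) as [-> _]. destruct (Nat.eq_dec k (S m)) as [->|Hne].
      + rewrite <- (agree_pre P Q m (S m) Hag) by lia. exact H0.
      + apply Hrest; [lia|]. intros i Hi.
        apply (partialS Q i); [|lia]. intros j Hj. split; [apply IHk; lia|apply HA]. }
  split; assumption.
Qed.

Lemma ruleS_good (G : history -> Bmove) :
  (forall k (Q : play),
      (forall i, (i < k)%nat -> legalA beta (fst Q i) (snd Q i) /\ 0 < lenB (fst Q i)) ->
      legalB beta (prf Q k) (G (prf Q k))) ->
  GoodS (rplay (fun h => (G h, sigma h (G h)))).
Proof.
  intros Hrest.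
  set (Q := rplay (fun h => (G h, sigma h (G h)))).
  assert (Haft : forall i, fst Q i = G (prf Q i) /\ snd Q i = sigma (prf Q i) (G (prf Q i))).
  { intros i. unfold Q. rewrite pre_rplay. split; reflexivity. }
  assert (HA : forall k, snd Q k = sigma (prf Q k) (fst Q k)).
  { intro k. destruct (Haft k) as [-> ->]. reflexivity. }
  assert (HB : forall k, legalB beta (prf Q k) (fst Q k)).
  { intro k. induction k as [k IHk] using (well_founded_induction Wf_nat.lt_wf).
    destruct (Haft k) as [-> _]. apply Hrest. intros i Hi.
    apply (partialS Q i); [|lia]. intros j Hj. split; [apply IHk; lia|apply HA]. }
  split; assumption.
Qed.

Lemma defB_ok k (Q : play) :
  (forall i, (i < k)%nat -> legalA beta (fst Q i) (snd Q i) /\ 0 < lenB (fst Q i)) ->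
  legalB beta (prf Q k) (defB beta (prf Q k)).
Proof.
  intros H. destruct k.
  - unfold prf. apply legalB_0. unfold defB. simpl. lra.
  - unfold prf. rewrite defB_S. apply legalB_S. destruct (H k) as [HA Hl]; [lia|].
    apply defmove_legal; auto. unfold lenB in Hl. lra.
Qed.

Lemma GoodS_ex : exists P, GoodS P.
Proof. eexists. apply ruleS_good. apply defB_ok. Qed.

End AliceCase.

Lemma legalB_le beta h B : legalB beta h B -> fst B <= snd B.
Proof. unfold legalB. destruct (rev h) as [|[B' A'] t]; intros H; [lra|apply H]. Qed.

Section BobCase.
Variable beta : R.
Hypothesis Hb : 0 < beta < 1/3.
Variable tau : BobStrategy.
Hypothesis Ht : legal_Bob_strategy beta tau.

Definition GoodT (P : play) :=
  (forall k, fst P k = tau (prf P k)) /\ (forall k, legalA beta (fst P k) (snd P k)).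

Lemma partialT (Q : play) k :
  (forall i, (i <= k)%nat -> fst Q i = tau (prf Q i) /\ legalA beta (fst Q i) (snd Q i)) ->
  forall i, (i <= k)%nat -> legalB beta (prf Q i) (fst Q i).
Proof.
  intros H. induction k; intros i Hi.
  - assert (i = 0%nat) by lia. subst. destruct (H 0%nat (le_n _)) as [HB HA].
    rewrite HB. apply Ht. apply legal_history_prefix. intros; lia.
  - assert (IH : forall i, (i <= k)%nat -> legalB beta (prf Q i) (fst Q i))
      by (apply IHk; intros; apply H; lia).
    destruct (Nat.eq_dec i (S k)) as [->|Hne]; [|apply IH; lia].
    destruct (H (S k) (le_n _)) as [HB HA].
    rewrite HB. apply Ht. apply legal_history_prefix.
    intros j Hj. split; [apply IH; lia|apply H; lia].
Qed.

Lemma GoodT_full P : GoodT P -> Full beta P.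
Proof.
  intros [H1 H2] k. split; [|apply H2].
  apply (partialT P k); [|lia]. intros; auto.
Qed.

Lemma GoodT_clos P : (forall k, exists Q, GoodT Q /\ agree P Q k) -> GoodT P.
Proof.
  intros H. split; intro k; destruct (H k) as [Q [[G1 G2] Ha]];
  destruct (Ha k (le_n _)) as [E1 E2]; rewrite E1.
  - rewrite (agree_pre P Q k k Ha) by lia. apply G1.
  - rewrite E2. apply G2.
Qed.

Lemma GoodT_ex : exists P, GoodT P.
Proof.
  set (Q := rplay (fun h => (tau h, defA beta (tau h)))).
  assert (Haft : forall i, fst Q i = tau (prf Q i) /\ snd Q i = defA beta (fst Q i)).
  { intros i. unfold Q. rewrite pre_rplay. split; reflexivity. }
  exists Q.
  assert (HA : forall k, legalA beta (fst Q k) (snd Q k)).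
  { intro k. induction k as [k IHk] using (well_founded_induction Wf_nat.lt_wf).
    destruct (Haft k) as [E1 E2]. rewrite E2. apply defA_legal; [exact Hb|].
    apply (legalB_le beta (prf Q k)). rewrite E1. apply Ht. apply legal_history_prefix.
    intros i Hi. split; [|apply IHk; exact Hi].
    apply (partialT Q i); [|lia]. intros j Hj. split; [apply Haft|apply IHk; lia]. }
  split; [intro k; apply Haft|exact HA].
Qed.

Lemma extT_good P n (Ar : history -> Bmove -> Amove) :
  GoodT P ->
  (forall k, (n < k)%nat ->
     legalB beta (prf (rplay (ext P n (fun h => (tau h, Ar h (tau h))))) k)
                 (tau (prf (rplay (ext P n (fun h => (tau h, Ar h (tau h))))) k)) ->
     legalA beta (tau (prf (rplay (ext P n (fun h => (tau h, Ar h (tau h))))) k))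
                 (Ar (prf (rplay (ext P n (fun h => (tau h, Ar h (tau h))))) k)
                     (tau (prf (rplay (ext P n (fun h => (tau h, Ar h (tau h))))) k)))) ->
  GoodT (rplay (ext P n (fun h => (tau h, Ar h (tau h))))).
Proof.
  intros [P1 P2] Hr.
  set (Q := rplay (ext P n (fun h => (tau h, Ar h (tau h))))) in *.
  assert (Hag : agree P Q n) by apply ext_agree.
  assert (Haft : forall i, (n < i)%nat -> fst Q i = tau (prf Q i) /\ snd Q i = Ar (prf Q i) (tau (prf Q i))).
  { intros i Hi. pose proof (ext_after P n (fun h => (tau h, Ar h (tau h))) i Hi) as E.
    rewrite <- pre_rplay in E. fold Q in E.
    assert (E1 := f_equal fst E). assert (E2 := f_equal snd E). simpl in E1, E2.
    split; assumption. }
  assert (HB : forall k, fst Q k = tau (prf Q k)).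
  { intro k. destruct (Compare_dec.le_lt_dec k n) as [h|h].
    - rewrite <- (agree_pre P Q n k Hag) by lia. destruct (Hag k h) as [<- _]. apply P1.
    - apply Haft; exact h. }
  assert (HA : forall k, legalA beta (fst Q k) (snd Q k)).
  { intro k. induction k as [k IHk] using (well_founded_induction Wf_nat.lt_wf).
    destruct (Compare_dec.le_lt_dec k n) as [h|h].
    - destruct (Hag k h) as [<- <-]. apply P2.
    - destruct (Haft k h) as [E1 E2]. rewrite E2, E1. apply Hr; [exact h|].
      apply Ht. apply legal_history_prefix.
      intros i Hi. split; [|apply IHk; exact Hi].
      apply (partialT Q i); [|lia]. intros j Hj. split; [apply HB|apply IHk; lia]. }
  split; assumption.
Qed.

Lemma splitT P n : GoodT P -> exists P1 P2 m, (n < m)%nat /\ GoodT P1 /\ GoodT P2 /\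
  agree P P1 n /\ agree P P2 n /\ (forall x, inB (fst P1 m) x -> ~ inB (fst P2 m) x).
Proof.
  intros HP.
  set (Z1 := fst P (S (S n))).
  set (Ar := fun (h : history) (B : Bmove) =>
               if (length h =? S n)%nat then closedA Z1 else defA beta B).
  set (Q := rplay (ext P n (fun h => (tau h, Ar h (tau h))))).
  pose proof (GoodT_full P HP) as FP.
  assert (HZ : fst Z1 <= snd Z1 /\ (forall x, inB Z1 x -> inB (fst P (S n)) x /\ ~ inA (snd P (S n)) x) /\
               lenB Z1 = beta * lenB (fst P (S n))).
  { destruct (FP (S (S n))) as [H _]. unfold prf in H. apply legalB_S in H. exact H. }
  assert (Hag : agree P Q n) by apply ext_agree.
  assert (GQ : GoodT Q).
  { apply extT_good; [exact HP|]. intros k Hk HBk. fold Q in HBk |- *.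
    unfold Ar. replace (length (prf Q k)) with k by (unfold prf; rewrite length_prefix; reflexivity). destruct (Nat.eqb_spec k (S n)) as [->|Hne].
    - rewrite <- (agree_pre P Q n (S n) Hag) by lia. destruct HP as [P1 _]. rewrite <- P1.
      destruct HZ as [Hz1 [Hz2 Hz3]]. unfold legalA, wfA, lenA, closedA. simpl.
      split; [exact Hz1|]. split; [|exact Hz3].
      intros x Hx. apply Hz2. exact Hx.
    - apply defA_legal; [exact Hb|]. eapply legalB_le; exact HBk. }
  exists P, Q, (S (S n)). split; [lia|]. split; [exact HP|]. split; [exact GQ|].
  split; [apply agree_refl|]. split; [exact Hag|].
  intros x Hx1 Hx2.
  destruct (GoodT_full Q GQ (S (S n))) as [H _]. unfold prf in H. apply legalB_S in H.
  destruct H as [_ [H _]]. destruct (H x Hx2) as [_ Hn]. apply Hn.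
  assert (E : snd Q (S n) = closedA Z1).
  { pose proof (ext_after P n (fun h => (tau h, Ar h (tau h))) (S n) ltac:(lia)) as E.
    fold Q in E. assert (E2 := f_equal snd E). cbn [fst snd] in E2. rewrite E2.
    unfold Ar. rewrite length_hist. rewrite Nat.eqb_refl. reflexivity. }
  rewrite E. unfold closedA. simpl. exact Hx1.
Qed.

End BobCase.

Lemma no_Bob beta S : 0 < beta < 1/3 -> Bernstein S -> ~ Bob_has_winning_strategy beta S.
Proof.
  intros Hb [HS1 HS2] [tau [Ht Hw]].
  destruct (perfect beta Hb (GoodT beta tau) (GoodT_full beta tau Ht) (GoodT_clos beta tau)
              (GoodT_ex beta Hb tau Ht) (splitT beta Hb tau Ht)) as [C [Hc [Hu HC]]].
  destruct (HS1 C Hc Hu) as [x [Cx Sx]].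
  destruct (HC x Cx) as [Q [[G1 G2] Hx]].
  apply (Hw (fst Q) (snd Q) G1 G2). exists x. split; [exact Sx|exact Hx].
Qed.

Definition Ahi (A : Amove) : R := match A with (_, d, _, _) => d end.

Lemma mv_legal beta P m t : 0 < beta < 1/3 -> Full beta P ->
  fst (fst P m) <= t -> t + beta * lenB (fst P m) <= snd (fst P m) ->
  (Ahi (snd P m) < t \/ t + beta * lenB (fst P m) < Alo (snd P m)) ->
  legalB beta (prf P (S m)) (t, t + beta * lenB (fst P m)).
Proof.
  intros Hb HF H1 H2 H3. unfold prf. apply legalB_S. simpl.
  pose proof (Full_lenpos beta Hb P HF m).
  assert (0 < beta * lenB (fst P m)) by (apply Rmult_lt_0_compat; lra).
  split; [lra|]. split; [|unfold lenB; simpl; ring].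
  intros x Hx. unfold inB in *. simpl in Hx. split; [lra|].
  destruct (snd P m) as [[[c d] lc] rc]. simpl in H3. intro HA. apply inA_bounds in HA. lra.
Qed.

Lemma A_len beta P m : Full beta P -> Ahi (snd P m) = Alo (snd P m) + beta * lenB (fst P m).
Proof.
  intros HF. destruct (HF m) as [_ [_ [_ Hl]]]. destruct (snd P m) as [[[c d] lc] rc].
  simpl in *. lra.
Qed.

Lemma block beta P m p : 0 < beta < 1/3 -> Full beta P ->
  (forall B', legalB beta (prf P (S m)) B' -> inB B' p) ->
  let a := fst (fst P m) in let b := snd (fst P m) in let L := b - a in
  (p <= a + beta * L /\ forall t, a <= t <= a + (1 - 3 * beta) * L / 2 ->
       legalB beta (prf P (S m)) (t, t + beta * L)) \/
  (b - beta * L <= p /\ forall t, b - beta * L - (1 - 3 * beta) * L / 2 <= t <= b - beta * L ->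
       legalB beta (prf P (S m)) (t, t + beta * L)).
Proof.
  intros Hb HF Hall a b L. assert (HLe : L = b - a) by reflexivity.
  pose proof (Full_lenpos beta Hb P HF m) as HL. unfold lenB in HL. fold a b L in HL.
  pose proof (A_len beta P m HF) as Hd. unfold lenB in Hd. fold a b L in Hd.
  set (c := Alo (snd P m)) in *. set (d := Ahi (snd P m)) in *.
  assert (HbL : 0 < beta * L) by (apply Rmult_lt_0_compat; lra).
  assert (HbL3 : 3 * (beta * L) < L) by nra.
  assert (Hmv : forall t, a <= t -> t + beta * L <= b -> (d < t \/ t + beta * L < c) ->
            legalB beta (prf P (S m)) (t, t + beta * L)).
  { intros t h1 h2 h3. apply mv_legal; auto. }
  assert (Hr : d < b - beta * L -> b - beta * L <= p).
  { intros h. assert (inB (b - beta * L, b - beta * L + beta * L) p) as [H _].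
    { apply Hall. apply Hmv; [lra|lra|left; lra]. } simpl in H. exact H. }
  assert (Hl : a + beta * L < c -> p <= a + beta * L).
  { intros h. assert (inB (a, a + beta * L) p) as [_ H].
    { apply Hall. apply Hmv; [lra|lra|right; lra]. } simpl in H. exact H. }
  destruct (Rle_or_lt p (a + beta * L)) as [h1|h1].
  - left. split; [exact h1|]. intros t Ht.
    assert (b - beta * L <= d) by (destruct (Rle_or_lt (b - beta * L) d); [auto|]; apply Hr in H; lra).
    apply Hmv; [lra|lra|right; lra].
  - destruct (Rle_or_lt (b - beta * L) p) as [h2|h2].
    + right. split; [exact h2|]. intros t Ht.
      assert (c <= a + beta * L) by (destruct (Rle_or_lt c (a + beta * L)); [auto|]; apply Hl in H; lra).
      apply Hmv; [lra|lra|left; lra].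
    + exfalso. destruct (Rle_or_lt c (a + beta * L)) as [h3|h3].
      * assert (p >= b - beta * L) by (apply Rle_ge, Hr; lra). lra.
      * apply Hl in h3. lra.
Qed.

Section AliceSplit.
Variable beta : R.
Hypothesis Hb : 0 < beta < 1/3.
Variable sigma : AliceStrategy.
Hypothesis Hs : legal_Alice_strategy beta sigma.

Lemma extS P m B' : GoodS beta sigma P -> legalB beta (prf P (S m)) B' ->
  exists Q, GoodS beta sigma Q /\ agree P Q m /\ fst Q (S m) = B'.
Proof.
  intros HP HB.
  set (G := fun h : history => if (length h =? S m)%nat then B' else defB beta h).
  exists (rplay (ext P m (fun h => (G h, sigma h (G h))))).
  split; [|split; [apply ext_agree|]].
  - apply extS_good; auto.
    + unfold G. unfold prf. rewrite length_prefix, Nat.eqb_refl. exact HB.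
    + intros k Hk Q HQ. unfold G. replace (length (prf Q k)) with k
        by (unfold prf; rewrite length_prefix; reflexivity).
      replace (k =? S m)%nat with false by (symmetry; apply Nat.eqb_neq; lia).
      apply defB_ok; auto.
  - pose proof (ext_after P m (fun h => (G h, sigma h (G h))) (S m) ltac:(lia)) as E.
    assert (E1 := f_equal fst E). cbn [fst snd] in E1. rewrite E1.
    rewrite hist_ext by lia. unfold G, prf. rewrite length_prefix, Nat.eqb_refl. reflexivity.
Qed.

Variable P : play.
Hypothesis HP : GoodS beta sigma P.
Variable n : nat.
Variable p : R.
Hypothesis Hall : forall Q, GoodS beta sigma Q -> agree P Q n -> forall m, inB (fst Q m) p.

Definition reach q := exists Q m, GoodS beta sigma Q /\ agree P Q n /\ (n <= m)%nat /\
  q = (p - fst (fst Q m)) / lenB (fst Q m).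

Lemma pos_blocked Q m : GoodS beta sigma Q -> agree P Q n -> (n <= m)%nat ->
  forall B', legalB beta (prf Q (S m)) B' -> inB B' p.
Proof.
  intros HQ Ha Hm B' HB. destruct (extS Q m B' HQ HB) as [Q' [HQ' [Ha' E]]].
  rewrite <- E. apply Hall; auto. eapply agree_trans; [exact Ha|]. eapply agree_mono; [|exact Ha']. exact Hm.
Qed.

Lemma ratio_01 x L : 0 < L -> 0 <= x <= L -> 0 <= x / L <= 1.
Proof.
  intros HL Hx. unfold Rdiv. split.
  - apply Rmult_le_pos; [lra|left; apply Rinv_0_lt_compat; lra].
  - apply Rmult_le_reg_r with (r := L); [lra|]. rewrite Rmult_assoc, Rinv_l by lra. lra.
Qed.

Lemma reach_01 q : reach q -> 0 <= q <= 1.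
Proof.
  intros [Q [m [HQ [Ha [Hm ->]]]]].
  pose proof (Full_lenpos beta Hb Q (GoodS_full beta Hb sigma Hs Q HQ) m) as HL.
  pose proof (Hall Q HQ Ha m) as [h1 h2]. unfold lenB in *.
  apply ratio_01; lra.
Qed.

Lemma reach_move Q m t : GoodS beta sigma Q -> agree P Q n -> (n <= m)%nat ->
  legalB beta (prf Q (S m)) (t, t + beta * lenB (fst Q m)) ->
  reach ((p - t) / (beta * lenB (fst Q m))).
Proof.
  intros HQ Ha Hm HB. destruct (extS Q m _ HQ HB) as [Q' [HQ' [Ha' E]]].
  exists Q', (S m). split; [exact HQ'|]. split.
  { eapply agree_trans; [exact Ha|]. eapply agree_mono; [|exact Ha']. exact Hm. }
  split; [lia|]. rewrite E. unfold lenB. simpl. f_equal. ring.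
Qed.

Lemma reach_sides q : reach q -> q <= beta \/ 1 - beta <= q.
Proof.
  intros [Q [m [HQ [Ha [Hm ->]]]]].
  pose proof (GoodS_full beta Hb sigma Hs Q HQ) as HF.
  pose proof (Full_lenpos beta Hb Q HF m) as HL. unfold lenB in *.
  destruct (block beta Q m p Hb HF (pos_blocked Q m HQ Ha Hm)) as [[h _]|[h _]].
  - left. apply Rmult_le_reg_r with (r := snd (fst Q m) - fst (fst Q m)); [lra|].
    unfold Rdiv. rewrite Rmult_assoc, Rinv_l by lra. lra.
  - right. apply Rmult_le_reg_r with (r := snd (fst Q m) - fst (fst Q m)); [lra|].
    unfold Rdiv. rewrite Rmult_assoc, Rinv_l by lra. lra.
Qed.

Lemma reach_left q : reach q -> q <= beta -> reach (q / beta).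
Proof.
  intros Hr Hq. destruct Hr as [Q [m [HQ [Ha [Hm ->]]]]].
  pose proof (GoodS_full beta Hb sigma Hs Q HQ) as HF.
  pose proof (Full_lenpos beta Hb Q HF m) as HL. unfold lenB in HL.
  destruct (block beta Q m p Hb HF (pos_blocked Q m HQ Ha Hm)) as [[h Ht]|[h _]].
  - replace ((p - fst (fst Q m)) / lenB (fst Q m) / beta)
      with ((p - fst (fst Q m)) / (beta * lenB (fst Q m)))
      by (unfold lenB; field; lra).
    apply reach_move; auto. apply Ht.
    assert (0 <= (1 - 3 * beta) * (snd (fst Q m) - fst (fst Q m)) / 2).
    { apply Rmult_le_pos; [apply Rmult_le_pos|]; lra. }
    lra.
  - exfalso.
    assert (1 - beta <= (p - fst (fst Q m)) / lenB (fst Q m)).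
    { apply Rmult_le_reg_r with (r := lenB (fst Q m)); unfold lenB in *; [lra|].
      unfold Rdiv. rewrite Rmult_assoc, Rinv_l by lra. lra. }
    lra.
Qed.

Lemma reach_right q : reach q -> 1 - beta <= q -> reach ((q - 1 + beta) / beta).
Proof.
  intros Hr Hq. destruct Hr as [Q [m [HQ [Ha [Hm ->]]]]].
  pose proof (GoodS_full beta Hb sigma Hs Q HQ) as HF.
  pose proof (Full_lenpos beta Hb Q HF m) as HL. unfold lenB in HL.
  destruct (block beta Q m p Hb HF (pos_blocked Q m HQ Ha Hm)) as [[h _]|[h Ht]].
  - exfalso.
    assert ((p - fst (fst Q m)) / lenB (fst Q m) <= beta).
    { apply Rmult_le_reg_r with (r := lenB (fst Q m)); unfold lenB in *; [lra|].
      unfold Rdiv. rewrite Rmult_assoc, Rinv_l by lra. lra. }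
    lra.
  - replace (((p - fst (fst Q m)) / lenB (fst Q m) - 1 + beta) / beta)
      with ((p - (snd (fst Q m) - beta * lenB (fst Q m))) / (beta * lenB (fst Q m)))
      by (unfold lenB; field; lra).
    apply reach_move; auto. unfold lenB. apply Ht.
    assert (0 <= (1 - 3 * beta) * (snd (fst Q m) - fst (fst Q m)) / 2).
    { apply Rmult_le_pos; [apply Rmult_le_pos|]; lra. }
    lra.
Qed.

Definition w0 := (1 - 3 * beta) / (2 * beta).

Lemma w0_pos : 0 < w0.
Proof. unfold w0. apply Rdiv_lt_0_compat; lra. Qed.

Lemma reach_base : exists u, forall q, u <= q <= u + w0 -> reach q.
Proof.
  pose proof (GoodS_full beta Hb sigma Hs P HP) as HF.
  pose proof (Full_lenpos beta Hb P HF n) as HL. unfold lenB in HL.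
  set (a := fst (fst P n)) in *. set (b := snd (fst P n)) in *.
  assert (Hrange : forall t0, (forall t, t0 <= t <= t0 + (1 - 3 * beta) * (b - a) / 2 ->
                     legalB beta (prf P (S n)) (t, t + beta * (b - a))) ->
            exists u, forall q, u <= q <= u + w0 -> reach q).
  { intros t0 Ht0. exists ((p - t0) / (beta * (b - a)) - w0). intros q Hq.
    assert (Hbl : 0 < beta * (b - a)) by (apply Rmult_lt_0_compat; lra).
    set (t := p - beta * (b - a) * q).
    replace q with ((p - t) / (beta * lenB (fst P n))) by (unfold t, lenB; fold a b; field; lra).
    apply reach_move; auto; [apply agree_refl|]. unfold lenB; fold a b. apply Ht0.
    unfold w0 in Hq.
    assert (E1 : (p - t0) / (beta * (b - a)) * (beta * (b - a)) = p - t0) by (field; lra).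
    assert (E2 : (1 - 3 * beta) / (2 * beta) * (beta * (b - a)) = (1 - 3 * beta) * (b - a) / 2)
      by (field; lra).
    destruct Hq as [Hq1 Hq2].
    apply Rmult_le_compat_r with (r := beta * (b - a)) in Hq1; [|lra].
    apply Rmult_le_compat_r with (r := beta * (b - a)) in Hq2; [|lra].
    rewrite Rmult_minus_distr_r, E1, E2 in Hq1. rewrite Rmult_plus_distr_r, Rmult_minus_distr_r, E1, E2 in Hq2.
    unfold t. split; nra. }
  destruct (block beta P n p Hb HF (pos_blocked P n HP (agree_refl P n) (le_n n))) as [[_ Ht]|[_ Ht]].
  - apply (Hrange a). exact Ht.
  - apply (Hrange (b - beta * (b - a) - (1 - 3 * beta) * (b - a) / 2)).
    intros t Ht'. apply Ht. unfold a, b in *. lra.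
Qed.

Lemma reach_claim k : exists u w, w0 * (INR k + 1) <= w /\ forall q, u <= q <= u + w -> reach q.
Proof.
  pose proof w0_pos as Hw0.
  induction k.
  - destruct reach_base as [u Hu]. exists u, w0. split; [simpl; lra|exact Hu].
  - destruct IHk as [u [w [Hw Hr]]].
    assert (HINR : 0 <= INR k) by apply pos_INR.
    assert (Hww : w0 <= w) by nra.
    assert (Hnew : w0 * (INR (S k) + 1) <= w / beta).
    { rewrite S_INR. assert (3 * w <= w / beta).
      { assert (E : w / beta * beta = w) by (field; lra).
        apply Rmult_le_reg_r with (r := beta); [lra|]. rewrite E. nra. }
      nra. }
    assert (Hu : reach u) by (apply Hr; lra).
    assert (Huw : reach (u + w)) by (apply Hr; lra).
    destruct (Rle_or_lt (u + w) beta) as [h1|h1].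
    + exists (u / beta), (w / beta). split; [exact Hnew|]. intros q Hq.
      replace q with ((beta * q) / beta) by (field; lra).
      assert (u <= beta * q <= u + w).
      { destruct Hq as [Hq1 Hq2]. split.
        - apply Rmult_le_compat_l with (r := beta) in Hq1; [|lra].
          replace (beta * (u / beta)) with u in Hq1 by (field; lra). exact Hq1.
        - apply Rmult_le_compat_l with (r := beta) in Hq2; [|lra].
          replace (beta * (u / beta + w / beta)) with (u + w) in Hq2 by (field; lra). exact Hq2. }
      apply reach_left; [apply Hr; exact H|lra].
    + destruct (Rle_or_lt (1 - beta) u) as [h2|h2].
      * exists ((u - 1 + beta) / beta), (w / beta). split; [exact Hnew|]. intros q Hq.
        replace q with (((beta * q + 1 - beta) - 1 + beta) / beta) by (field; lra).
        assert (u <= beta * q + 1 - beta <= u + w).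
        { destruct Hq as [Hq1 Hq2]. split.
          - apply Rmult_le_compat_l with (r := beta) in Hq1; [|lra].
            replace (beta * ((u - 1 + beta) / beta)) with (u - 1 + beta) in Hq1 by (field; lra). lra.
          - apply Rmult_le_compat_l with (r := beta) in Hq2; [|lra].
            replace (beta * ((u - 1 + beta) / beta + w / beta)) with (u - 1 + beta + w) in Hq2
              by (field; lra). lra. }
        apply reach_right; [apply Hr; exact H|lra].
      * exfalso. destruct (Rle_or_lt u beta) as [h3|h3].
        -- set (z := Rmin (u + w) (1/2)).
           assert (Hz : reach z).
           { apply Hr. unfold z. split.
             - apply Rmin_glb; lra.
             - apply Rmin_l. }
           destruct (reach_sides z Hz) as [h|h]; unfold z in h.
           ++ unfold Rmin in h. destruct Rle_dec in h; lra.
           ++ pose proof (Rmin_r (u + w) (1/2)). lra.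
        -- destruct (reach_sides u Hu); lra.
Qed.

Lemma avoid_false : False.
Proof.
  pose proof w0_pos as Hw0.
  destruct (INR_unbounded (/ w0)) as [k Hk].
  destruct (reach_claim k) as [u [w [Hw Hr]]].
  assert (0 <= INR k) by apply pos_INR.
  assert (0 <= w) by nra.
  pose proof (reach_01 u (Hr u ltac:(lra))).
  pose proof (reach_01 (u + w) (Hr (u + w) ltac:(lra))).
  assert (w0 * INR k > 1).
  { apply Rmult_gt_compat_l with (r := w0) in Hk; [|lra]. rewrite Rinv_r in Hk by lra. lra. }
  nra.
Qed.

End AliceSplit.

Lemma inB_close B x y : inB B x -> inB B y -> Rabs (x - y) <= lenB B.
Proof. unfold inB, lenB. intros [] []. apply Rabs_le. lra. Qed.

Lemma splitS beta sigma P n : 0 < beta < 1/3 -> legal_Alice_strategy beta sigma ->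
  GoodS beta sigma P -> exists P1 P2 m, (n < m)%nat /\ GoodS beta sigma P1 /\ GoodS beta sigma P2 /\
  agree P P1 n /\ agree P P2 n /\ (forall x, inB (fst P1 m) x -> ~ inB (fst P2 m) x).
Proof.
  intros Hb Hs HP. pose proof (GoodS_full beta Hb sigma Hs P HP) as HF.
  destruct (Full_point beta P Hb HF) as [p Hp].
  destruct (classic (exists Q, GoodS beta sigma Q /\ agree P Q n /\ exists m, ~ inB (fst Q m) p))
    as [[Q [HQ [Ha [m0 Hm]]]]|Hno].
  - pose proof (GoodS_full beta Hb sigma Hs Q HQ) as FQ.
    assert (Heps : exists eps, 0 < eps /\ forall y, inB (fst Q m0) y -> eps <= Rabs (y - p)).
    { unfold inB in Hm. destruct (Rlt_or_le p (fst (fst Q m0))) as [h|h].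
      - exists (fst (fst Q m0) - p). split; [lra|]. intros y [Hy1 Hy2].
        rewrite Rabs_pos_eq; lra.
      - assert (p > snd (fst Q m0)) by (apply Rnot_le_gt; intro; apply Hm; auto).
        exists (p - snd (fst Q m0)). split; [lra|]. intros y [Hy1 Hy2].
        rewrite Rabs_left; lra. }
    destruct Heps as [eps [He Hy]].
    destruct (Full_small beta Hb P HF eps He) as [N HN].
    set (k := Nat.max (Nat.max N m0) (S n)).
    exists P, Q, k. split; [unfold k; lia|]. split; [exact HP|]. split; [exact HQ|].
    split; [apply agree_refl|]. split; [exact Ha|].
    intros x Hx1 Hx2.
    pose proof (inB_close _ x p Hx1 (Hp k)). pose proof (HN k ltac:(unfold k; lia)).
    pose proof (Hy x (Full_nest_le beta Q FQ m0 k x ltac:(unfold k; lia) Hx2)). lra.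
  - exfalso. apply (avoid_false beta Hb sigma Hs P HP n p).
    intros Q HQ Ha m. apply NNPP. intro Hn. apply Hno. exists Q. split; [exact HQ|].
    split; [exact Ha|]. exists m. exact Hn.
Qed.

Lemma no_Alice beta S : 0 < beta < 1/3 -> Bernstein S -> ~ Alice_has_winning_strategy beta S.
Proof.
  intros Hb [HS1 HS2] [sigma [Hs Hw]].
  destruct (perfect beta Hb (GoodS beta sigma) (GoodS_full beta Hb sigma Hs) (GoodS_clos beta sigma)
              (GoodS_ex beta Hb sigma Hs) (fun P n => splitS beta sigma P n Hb Hs)) as [C [Hc [Hu HC]]].
  apply (HS2 C Hc Hu). intros x Cx. apply NNPP. intro Sx.
  destruct (HC x Cx) as [Q [HQ Hx]].
  pose proof (GoodS_full beta Hb sigma Hs Q HQ) as FQ.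
  destruct HQ as [G1 G2].
  destruct (Hw (fst Q) (snd Q) G1 G2) as [y [Sy Hy]].
  destruct (Req_dec x y) as [->|Hne]; [contradiction|].
  assert (0 < Rabs (x - y)) by (apply Rabs_pos_lt; lra).
  destruct (Full_small beta Hb Q FQ (Rabs (x - y)) H) as [N HN].
  pose proof (inB_close _ x y (Hx N) (Hy N)). pose proof (HN N (le_n _)). lra.
Qed.

Theorem theorem2 (beta : R) (S : R -> Prop) :
  0 < beta < 1/3 -> Bernstein S ->
  ~ Alice_has_winning_strategy beta S /\ ~ Bob_has_winning_strategy beta S.
Proof. intros Hb HS. split; [apply no_Alice|apply no_Bob]; assumption. Qed.
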